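(* In the FHMA network described below with a fixed integer number of sub-bands $N\ge 2$, consider the normalized mean local delay $\frac{D(N)}{\log_2(1+\theta)}$ as a function of the SINR threshold $\theta>0$, and let $\theta_{\mathrm{opt}}$ denote its minimizer. (i) In the noise-limited regime (interference neglected, i.e. $D(N)=N\exp\left(\frac{\theta r_0^\alpha WN_0}{N}\right)$), $$\theta_{\mathrm{opt}}=\exp\left(\mathcal{W}\left(\frac{N}{r_0^{\alpha}WN_0}\right)\right)-1,$$ where $\mathcal{W}$ is the Lambert $\mathcal{W}$ function, i.e. $\mathcal{W}(z)e^{\mathcal{W}(z)}=z$. (ii) In the interference-limited regime (noise neglected, $N_0=0$), $$\theta_{\mathrm{opt}}\in\left(b_0^{-1/(\delta+1)}-1,\ b_0^{-1/\delta}\right),\qquad b_0=\lambda c_d r_0^d\delta C(\delta)(N-1)^{\delta-1}N^{-\delta}.$$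
   Context: Model: transmitters form a homogeneous Poisson point process $\Phi$ of intensity $\lambda>0$ in $\mathbb{R}^d$; the typical receiver is at the origin and its desired transmitter $x_0\in\Phi$ is at distance $r_0>0$; probabilities are under the Palm distribution at $x_0$. Time is slotted. Path loss $\kappa r^{-\alpha}$ with $\alpha>d$, $\delta=d/\alpha\in(0,1)$. Power fading coefficients are i.i.d. exponential with mean $1$ over transmitters and slots, independent of everything. Unit power, always backlogged transmitters. Bandwidth $W$, noise power spectral density $N_r$, $N_0=N_r/\kappa$, SINR threshold $\theta>0$. $c_d$ is the volume of the unit ball in $\mathbb{R}^d$, $C(\delta)=\Gamma(1+\delta)\Gamma(1-\delta)=\frac{\pi\delta}{\sin(\pi\delta)}$. FHMA with $N$ sub-bands: each transmitter $x$ independently picks a sub-band $\mathcal{S}_k(x)$ uniformly from $\{1,\dots,N\}$ in each slot $k$; $\mathrm{SINR}_k=\frac{h_{k,x_0}r_0^{-\alpha}}{WN_0/N+\sum_{x\in\Phi\setminus\{x_0\}}h_{k,x}|x|^{-\alpha}\mathbf{1}(\mathcal{S}_k(x)=\mathcal{S}_k(x_0))}$; a slot is successful if $\mathrm{SINR}_k>\theta$; the local delay is the number of slots until the $N$-th successful slot and $D(N)$ (depending on $\theta$) is its mean, which equals $N\exp\left(\frac{\lambda c_d r_0^d\theta^{\delta}C(\delta)}{(N-1)^{1-\delta}N^{\delta}}+\frac{\theta r_0^\alpha WN_0}{N}\right)$. The normalization by $\log_2(1+\theta)$ accounts for slot duration proportional to $1/\log_2(1+\theta)$. *)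

(* Defs.v *)
From Stdlib Require Import Reals Lra ClassicalEpsilon.
Open Scope R_scope.

(* Volume c_d of the unit ball in R^d, via c_0 = 1, c_1 = 2,
   c_d = (2*PI/d) * c_{d-2}  (equivalent to pi^(d/2)/Gamma(d/2+1)). *)
Fixpoint unit_ball_volume (d : nat) : R :=
  match d with
  | O => 1
  | S O => 2
  | S (S k as d1) => 2 * PI / INR (S d1) * unit_ball_volume k
  end.

(* C(delta) = Gamma(1+delta) Gamma(1-delta) = pi delta / sin(pi delta), 0<delta<1 *)
Definition Cdelta (delta : R) : R := PI * delta / sin (PI * delta).

(* Principal branch W_0 of the Lambert W function: the w >= -1 with w e^w = z
   (well defined for z >= -1/e). *)
Definition LambertW (z : R) : R :=
  epsilon (inhabits 0) (fun w => -1 <= w /\ w * exp w = z).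

Definition log2 (x : R) : R := ln x / ln 2.

Definition D_noise (N : nat) (r0 alpha W N0 theta : R) : R :=
  INR N * exp (theta * Rpower r0 alpha * W * N0 / INR N).

Definition D_interf (N : nat) (lam : R) (d : nat) (r0 alpha theta : R) : R :=
  let delta := INR d / alpha in
  INR N * exp (lam * unit_ball_volume d * r0 ^ d * Rpower theta delta * Cdelta delta
               / (Rpower (INR N - 1) (1 - delta) * Rpower (INR N) delta)).

Definition normalized (D : R -> R) (theta : R) : R := D theta / log2 (1 + theta).

Definition is_minimizer (f : R -> R) (t : R) : Prop :=
  0 < t /\ forall theta, 0 < theta -> theta <> t -> f t < f theta.

(* Main.v *)
Require Import Defs.
From Stdlib Require Import Reals Lra Lia ClassicalEpsilon.
From Coquelicot Require Import Coquelicot.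
Open Scope R_scope.

Lemma cont_of_deriv (g g' : R -> R) (y : R) : is_derive g y (g' y) -> continuity_pt g y.
Proof.
  intros H. apply continuity_pt_filterlim. apply (ex_derive_continuous (K:=R_AbsRing) (V:=R_NormedModule)). exists (g' y); exact H.
Qed.

Lemma min_from_deriv (g g' : R->R) t : 0<t ->
  (forall x, 0<x -> is_derive g x (g' x)) ->
  (forall x, 0<x<t -> g' x < 0) -> (forall x, t<x -> 0 < g' x) -> g' t = 0 ->
  is_minimizer g t.
Proof.
  intros Ht Hd Hn Hp H0. split; [exact Ht|]. intros x Hx Hne.
  destruct (Rtotal_order x t) as [Hlt|[Heq|Hgt]]; [|contradiction|].
  - set (m := (x+t)/2).
    destruct (MVT_gen g x m g') as [c [Hc Hc']].
    + rewrite Rmin_left, Rmax_right by (unfold m; lra). intros y Hy. apply Hd. lra.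
    + rewrite Rmin_left, Rmax_right by (unfold m; lra). intros y Hy. apply (cont_of_deriv g g'), Hd. lra.
    + rewrite Rmin_left, Rmax_right in Hc by (unfold m; lra).
      destruct (MVT_gen g m t g') as [c' [Hc2 Hc2']].
      * rewrite Rmin_left, Rmax_right by (unfold m; lra). intros y Hy. apply Hd. unfold m in *; lra.
      * rewrite Rmin_left, Rmax_right by (unfold m; lra). intros y Hy. apply (cont_of_deriv g g'), Hd. unfold m in *; lra.
      * rewrite Rmin_left, Rmax_right in Hc2 by (unfold m; lra).
        assert (g' c < 0) by (apply Hn; unfold m in *; lra).
        assert (g' c' <= 0).
        { destruct (Rle_lt_or_eq_dec c' t) as [h|h]; [lra| |].
          - left; apply Hn; unfold m in *; lra.
          - subst; lra. }
        assert (m - x > 0) by (unfold m; lra). assert (t - m > 0) by (unfold m; lra).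
        nra.
  - set (m := (x+t)/2).
    destruct (MVT_gen g m x g') as [c [Hc Hc']].
    + rewrite Rmin_left, Rmax_right by (unfold m; lra). intros y Hy. apply Hd. unfold m in *; lra.
    + rewrite Rmin_left, Rmax_right by (unfold m; lra). intros y Hy. apply (cont_of_deriv g g'), Hd. unfold m in *; lra.
    + rewrite Rmin_left, Rmax_right in Hc by (unfold m; lra).
      destruct (MVT_gen g t m g') as [c' [Hc2 Hc2']].
      * rewrite Rmin_left, Rmax_right by (unfold m; lra). intros y Hy. apply Hd. unfold m in *; lra.
      * rewrite Rmin_left, Rmax_right by (unfold m; lra). intros y Hy. apply (cont_of_deriv g g'), Hd. unfold m in *; lra.
      * rewrite Rmin_left, Rmax_right in Hc2 by (unfold m; lra).
        assert (g' c > 0) by (apply Hp; unfold m in *; lra).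
        assert (g' c' >= 0).
        { destruct (Rle_lt_or_eq_dec t c') as [h|h]; [lra| |].
          - left; apply Hp; unfold m in *; lra.
          - subst; lra. }
        assert (x - m > 0) by (unfold m; lra). assert (m - t > 0) by (unfold m; lra).
        nra.
Qed.

Lemma norm_deriv (M : R) (e e' : R -> R) x : 0 < x -> is_derive e x (e' x) ->
  is_derive (normalized (fun y => M * exp (e y))) x
    (M * exp (e x) * ln 2 * (e' x * ln (1+x) - / (1+x)) / (ln (1+x))^2).
Proof.
  intros Hx He. unfold normalized, log2.
  assert (Hl: 0 < ln (1+x)) by (rewrite <- ln_1; apply ln_increasing; lra).
  assert (Hl2: 0 < ln 2) by (rewrite <- ln_1; apply ln_increasing; lra).
  auto_derive.
  - repeat split; try lra. exists (e' x); exact He.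
    apply Rgt_not_eq. unfold Rdiv. apply Rmult_gt_0_compat; auto. apply Rinv_0_lt_compat; auto.
  - change (Derive (fun x0 : R => e x0) x) with (Derive e x). rewrite (is_derive_unique e x (e' x) He). field. repeat split; lra.
Qed.

Lemma h_lt a u y : 0<y -> a*u*y < 1 -> a*u < /y.
Proof. intros Hy H. apply (Rmult_lt_reg_r y); auto. rewrite Rinv_l; lra. Qed.
Lemma h_gt a u y : 0<y -> a*u*y > 1 -> a*u > /y.
Proof. intros Hy H. apply (Rmult_lt_reg_r y); auto. rewrite Rinv_l; lra. Qed.
Lemma h_eq a u y : 0<y -> a*u*y = 1 -> a*u = /y.
Proof. intros Hy H. apply (Rmult_eq_reg_r y); [|lra]. rewrite Rinv_l; lra. Qed.

Lemma key (M : R) (e e' : R -> R) t : 0 < M -> 0 < t ->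
  (forall x, 0 < x -> is_derive e x (e' x)) ->
  (forall x, 0 < x < t -> e' x * ln (1+x) < / (1+x)) ->
  (forall x, t < x -> e' x * ln (1+x) > / (1+x)) ->
  e' t * ln (1+t) = / (1+t) ->
  is_minimizer (normalized (fun y => M * exp (e y))) t.
Proof.
  intros HM Ht Hd Hn Hp H0.
  assert (Hl2: 0 < ln 2) by (rewrite <- ln_1; apply ln_increasing; lra).
  assert (Hpos: forall x, 0 < x -> 0 < M * exp (e x) * ln 2 / (ln (1+x))^2).
  { intros x Hx. assert (0 < ln (1+x)) by (rewrite <- ln_1; apply ln_increasing; lra).
    assert (0 < exp (e x)) by apply exp_pos.
    unfold Rdiv. apply Rmult_lt_0_compat. apply Rmult_lt_0_compat; [|lra]. apply Rmult_lt_0_compat; lra.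
    apply Rinv_0_lt_compat. apply pow_lt. lra. }
  apply (min_from_deriv _ (fun x => M * exp (e x) * ln 2 * (e' x * ln (1+x) - / (1+x)) / (ln (1+x))^2)); auto.
  - intros x Hx. apply norm_deriv; auto.
  - intros x Hx. specialize (Hpos x ltac:(lra)). specialize (Hn x Hx).
    replace (M * exp (e x) * ln 2 * (e' x * ln (1 + x) - / (1 + x)) / ln (1 + x) ^ 2)
      with ((M * exp (e x) * ln 2 / ln (1 + x) ^ 2) * (e' x * ln (1 + x) - / (1 + x))) by (unfold Rdiv; ring).
    nra.
  - intros x Hx. specialize (Hpos x ltac:(lra)). specialize (Hp x Hx).
    replace (M * exp (e x) * ln 2 * (e' x * ln (1 + x) - / (1 + x)) / ln (1 + x) ^ 2)
      with ((M * exp (e x) * ln 2 / ln (1 + x) ^ 2) * (e' x * ln (1 + x) - / (1 + x))) by (unfold Rdiv; ring).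
    nra.
  - rewrite H0. unfold Rdiv. ring.
Qed.

Lemma Rpower_pos x y : 0 < Rpower x y.
Proof. unfold Rpower; apply exp_pos. Qed.

Lemma lambert_spec z : 0 < z -> 0 < LambertW z /\ LambertW z * exp (LambertW z) = z.
Proof.
  intros Hz. unfold LambertW.
  destruct (epsilon_spec (inhabits 0) (fun w => -1 <= w /\ w * exp w = z)) as [H1 H2].
  - destruct (IVT (fun w => w * exp w - z) 0 z) as [w [Hw Hw']].
    + reg.
    + lra.
    + rewrite exp_0; lra.
    + assert (1 < exp z). { rewrite <- exp_0. apply exp_increasing; lra. } nra.
    + exists w. split; [lra|]. simpl in Hw'. lra.
  - set (w := epsilon _ _) in *. split; auto.
    destruct (Rle_or_lt w 0) as [h|h]; auto.
    assert (0 < exp w) by apply exp_pos. nra.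
Qed.

Lemma part1 N r0 alpha W N0 : (2 <= N)%nat -> 0 < r0 -> 0 < W -> 0 < N0 ->
  is_minimizer (normalized (D_noise N r0 alpha W N0))
    (exp (LambertW (INR N / (Rpower r0 alpha * W * N0))) - 1).
Proof.
  intros HN Hr HW HN0.
  assert (HNr : 2 <= INR N) by (replace 2 with (INR 2) by (simpl; ring); apply le_INR; lia).
  set (A := Rpower r0 alpha * W * N0).
  assert (HA : 0 < A) by (unfold A; pose proof (Rpower_pos r0 alpha); apply Rmult_lt_0_compat; [|lra]; apply Rmult_lt_0_compat; lra).
  set (z := INR N / A).
  assert (Hz : 0 < z) by (unfold z, Rdiv; apply Rmult_lt_0_compat; [lra|apply Rinv_0_lt_compat; lra]).
  destruct (lambert_spec z Hz) as [Hw Hwe].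
  set (w := LambertW z) in *.
  change (normalized (D_noise N r0 alpha W N0)) with
    (normalized (fun y => INR N * exp ((fun x => x * Rpower r0 alpha * W * N0 / INR N) y))).
  assert (Hlt : 1 < exp w) by (rewrite <- exp_0; apply exp_increasing; lra).
  assert (Hlnt : ln (1 + (exp w - 1)) = w) by (replace (1 + (exp w - 1)) with (exp w) by ring; apply ln_exp).
  assert (Hcmp : forall x, 0 < x -> (A / INR N) * ln (1+x) * (1+x) - 1 = (A / INR N) * (ln (1+x) * exp (ln (1+x)) - w * exp w)).
  { intros x Hx. rewrite exp_ln by lra. rewrite Hwe. unfold z. field. split; lra. }
  assert (Hmono : forall u v, 0 <= u -> u < v -> u * exp u < v * exp v).
  { intros u v Hu Huv. assert (exp u < exp v) by (apply exp_increasing; lra).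
    assert (0 < exp u) by apply exp_pos. nra. }
  assert (HAN : 0 < A / INR N) by (unfold Rdiv; apply Rmult_lt_0_compat; [lra|apply Rinv_0_lt_compat; lra]).
  apply (key _ _ (fun _ => A / INR N)); try lra.
  - intros x Hx. auto_derive; auto. unfold A. field. lra.
  - intros x Hx. apply h_lt; [lra|].
    assert (0 < ln (1+x)) by (rewrite <- ln_1; apply ln_increasing; lra).
    assert (ln (1+x) < w) by (rewrite <- Hlnt; apply ln_increasing; lra).
    specialize (Hmono (ln (1+x)) w ltac:(lra) H0). specialize (Hcmp x ltac:(lra)).
    assert (0 < A / INR N * (w * exp w - ln (1 + x) * exp (ln (1 + x)))) by (apply Rmult_lt_0_compat; lra). lra.
  - intros x Hx. apply h_gt; [lra|].
    assert (w < ln (1+x)) by (rewrite <- Hlnt; apply ln_increasing; lra).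
    specialize (Hmono w (ln (1+x)) ltac:(lra) H). specialize (Hcmp x ltac:(lra)).
    assert (0 < A / INR N * (ln (1 + x) * exp (ln (1 + x)) - w * exp w)) by (apply Rmult_lt_0_compat; lra). lra.
  - apply h_eq; [lra|]. specialize (Hcmp (exp w - 1) ltac:(lra)). rewrite Hlnt in Hcmp.
    replace (1 + (exp w - 1)) with (exp w) in * by ring. nra.
Qed.

Lemma ubv_pos d : 0 < unit_ball_volume d /\ 0 < unit_ball_volume (S d).
Proof.
  induction d as [|d [IH1 IH2]]; simpl; [lra|]. split; [exact IH2|].
  change (0 < 2 * PI / INR (S (S d)) * unit_ball_volume d).
  apply Rmult_lt_0_compat; auto. unfold Rdiv. apply Rmult_lt_0_compat.
  pose proof PI_RGT_0; lra. apply Rinv_0_lt_compat, lt_0_INR; lia.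
Qed.

Lemma ln1p_pos x : 0 < x -> 0 < ln (1+x).
Proof. intros; rewrite <- ln_1; apply ln_increasing; lra. Qed.

Lemma ln1p_lt x : 0 < x -> ln (1+x) < x.
Proof.
  intros Hx. rewrite <- (ln_exp x) at 2. apply ln_increasing; [lra|]. apply exp_ineq1; lra.
Qed.

Lemma ln1p_gt x : 0 < x -> x < ln (1+x) * (1+x).
Proof.
  intros Hx. set (v := - x / (1+x)).
  assert (Hq : 0 < x / (1+x)) by (apply Rdiv_lt_0_compat; lra).
  assert (Hvq : v = - (x / (1+x))) by (unfold v, Rdiv; ring).
  assert (Hv : v <> 0) by lra.
  pose proof (exp_ineq1 v Hv).
  assert (1 + v = / (1+x)) by (unfold v; field; lra).
  assert (ln (/ (1+x)) < v). { rewrite <- (ln_exp v). apply ln_increasing. apply Rinv_0_lt_compat; lra. lra. }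
  rewrite ln_Rinv in H1 by lra.
  assert (x / (1+x) < ln (1+x)) by lra.
  apply (Rmult_lt_compat_r (1+x)) in H2; [|lra]. unfold Rdiv in H2. rewrite Rmult_assoc, Rinv_l in H2 by lra. lra.
Qed.

Definition rr x := ln (1+x) * (1+x) / x.

Lemma rr_incr x y : 0 < x -> x < y -> rr x < rr y.
Proof.
  intros Hx Hxy.
  apply (incr_function rr (Finite 0) p_infty (fun x => (x - ln (1+x)) / x^2)); simpl; auto; try lra.
  - intros z Hz _. unfold rr. auto_derive. repeat split; lra. field. split; lra.
  - intros z Hz _. pose proof (ln1p_lt z Hz). unfold Rdiv. apply Rmult_lt_0_compat; [lra|].
    apply Rinv_0_lt_compat; nra.
Qed.

Lemma rr_pos x : 0 < x -> 0 < rr x.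
Proof. intros Hx. unfold rr, Rdiv. pose proof (ln1p_pos x Hx). apply Rmult_lt_0_compat; [nra|]. apply Rinv_0_lt_compat; lra. Qed.

Lemma Rpow_m1 x dl : 0 < x -> Rpower x (dl - 1) * x = Rpower x dl.
Proof. intros Hx. replace dl with ((dl - 1) + 1) at 2 by ring. rewrite Rpower_plus, Rpower_1; auto. Qed.

Lemma part2_core M K dl : 0 < M -> 0 < K -> 0 < dl < 1 ->
  exists t, is_minimizer (normalized (fun y => M * exp (K * Rpower y dl))) t /\
    Rpower (K*dl) (- (1 / (dl + 1))) - 1 < t < Rpower (K*dl) (- (1 / dl)).
Proof.
  intros HM HK Hdl.
  set (b0 := K * dl).
  assert (Hb0 : 0 < b0) by (unfold b0; nra).
  set (Phi := fun x => b0 * Rpower x (dl - 1) * ln (1+x) * (1+x)).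
  assert (HPhi : forall x, 0 < x -> Phi x = b0 * Rpower x dl * rr x).
  { intros x Hx. unfold Phi, rr. rewrite <- (Rpow_m1 x dl Hx). field. lra. }
  assert (Hinc : forall x y, 0 < x -> x < y -> Phi x < Phi y).
  { intros x y Hx Hxy. rewrite !HPhi by lra.
    pose proof (rr_incr x y Hx Hxy). pose proof (rr_pos x Hx).
    assert (Rpower x dl < Rpower y dl) by (apply Rlt_Rpower_l; lra).
    pose proof (Rpower_pos x dl).
    assert (b0 * Rpower x dl < b0 * Rpower y dl) by (apply Rmult_lt_compat_l; lra).
    assert (0 < b0 * Rpower x dl) by (apply Rmult_lt_0_compat; lra).
    nra. }
  assert (Hle : forall x y, 0 < x -> x <= y -> Phi x <= Phi y).
  { intros x y Hx [h|h]; [left; apply Hinc; auto | subst; lra]. }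
  set (U := Rpower b0 (- (1 / dl))).
  assert (HU : 0 < U) by apply Rpower_pos.
  assert (HPU : 1 < Phi U).
  { rewrite HPhi by lra.
    assert (Rpower U dl = / b0).
    { unfold U. rewrite Rpower_mult. replace (- (1 / dl) * dl) with (Ropp 1) by (field; lra).
      rewrite Rpower_Ropp, Rpower_1; auto. }
    rewrite H. unfold rr. pose proof (ln1p_gt U HU).
    replace (b0 * / b0 * (ln (1 + U) * (1 + U) / U)) with ((ln (1 + U) * (1 + U)) / U) by (field; lra).
    apply (Rmult_lt_reg_r U); auto. unfold Rdiv. rewrite Rmult_assoc, Rinv_l; lra. }
  set (q := Rpower (/ (4 * b0)) (/ dl)).
  set (x1 := Rmin 1 q).
  assert (Hq : 0 < q) by apply Rpower_pos.
  assert (Hx1 : 0 < x1) by (unfold x1; apply Rmin_glb_lt; lra).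
  assert (HPx1 : Phi x1 < 1).
  { rewrite HPhi by lra.
    assert (Rpower x1 dl <= / (4 * b0)).
    { replace (/ (4 * b0)) with (Rpower q dl).
      apply Rle_Rpower_l; [lra|]. split; auto. apply Rmin_r.
      unfold q. rewrite Rpower_mult. replace (/ dl * dl) with 1 by (field; lra).
      apply Rpower_1. apply Rinv_0_lt_compat; lra. }
    assert (x1 <= 1) by apply Rmin_l.
    assert (rr x1 <= 2).
    { unfold rr. pose proof (ln1p_lt x1 Hx1). pose proof (ln1p_pos x1 Hx1).
      apply (Rmult_le_reg_r x1); auto. unfold Rdiv. rewrite Rmult_assoc, Rinv_l by lra. nra. }
    pose proof (rr_pos x1 Hx1). pose proof (Rpower_pos x1 dl).
    assert (b0 * Rpower x1 dl <= b0 * / (4 * b0)) by (apply Rmult_le_compat_l; lra).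
    replace (b0 * / (4 * b0)) with (/4) in H4 by (field; lra).
    nra. }
  assert (Hx1U : x1 < U).
  { destruct (Rlt_or_le x1 U) as [h|h]; auto. pose proof (Hle U x1 HU h). lra. }
  assert (Hcont : forall a, x1 <= a <= U -> continuity_pt (fun x => Phi x - 1) a).
  { intros a Ha. apply (cont_of_deriv _ (fun a => Derive (fun x => Phi x - 1) a)).
    apply Derive_correct. unfold Phi, Rpower. auto_derive. repeat split; lra. }
  destruct (Ranalysis5.IVT_interv (fun x => Phi x - 1) x1 U Hcont Hx1U) as [t [Ht Ht']]; try lra.
  simpl in Ht'.
  assert (Htp : 0 < t) by lra.
  assert (HPt : Phi t = 1) by lra.
  exists t. split.
  - apply (key M (fun y => K * Rpower y dl) (fun x => b0 * Rpower x (dl - 1))); auto.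
    + intros x Hx. replace (b0 * Rpower x (dl - 1)) with (K * (dl * Rpower x (dl - 1))) by (unfold b0; ring).
      apply is_derive_scal. apply is_derive_Reals. apply derivable_pt_lim_power; auto.
    + intros x Hx. apply h_lt; [lra|]. pose proof (Hinc x t ltac:(lra) ltac:(lra)). unfold Phi in *. lra.
    + intros x Hx. apply h_gt; [lra|]. pose proof (Hinc t x ltac:(lra) ltac:(lra)). unfold Phi in *. lra.
    + apply h_eq; [lra|]. unfold Phi in HPt. lra.
  - split.
    + set (s := Rpower b0 (- (1 / (dl + 1)))).
      destruct (Rle_or_lt s 1) as [hs|hs]; [lra|].
      set (t0 := s - 1).
      assert (Ht0 : 0 < t0) by (unfold t0; lra).
      assert (HP0 : Phi t0 < 1).
      { unfold Phi. replace (1 + t0) with s by (unfold t0; ring).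
        assert (Hb : b0 = Rpower s (- (dl + 1))).
        { unfold s. rewrite Rpower_mult. replace (- (1 / (dl + 1)) * - (dl + 1)) with 1 by (field; lra).
          rewrite Rpower_1; auto. }
        pose proof (ln1p_lt t0 Ht0). replace (1 + t0) with s in H by (unfold t0; ring).
        pose proof (ln1p_pos t0 Ht0). replace (1 + t0) with s in H0 by (unfold t0; ring).
        pose proof (Rpower_pos t0 (dl - 1)).
        assert (b0 * Rpower t0 (dl - 1) * ln s * s < b0 * Rpower t0 (dl - 1) * t0 * s).
        { apply Rmult_lt_compat_r; [lra|]. apply Rmult_lt_compat_l; [|lra]. apply Rmult_lt_0_compat; lra. }
        rewrite (Rmult_assoc _ (Rpower t0 (dl - 1)) t0), Rpow_m1 in H2 by lra.
        assert (b0 * s = / Rpower s dl).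
        { rewrite Hb. rewrite <- (Rpower_1 s) at 2 by lra. rewrite <- Rpower_plus.
          replace (- (dl + 1) + 1) with (- dl) by ring. apply Rpower_Ropp. }
        assert (Rpower t0 dl < Rpower s dl) by (apply Rlt_Rpower_l; unfold t0; lra).
        pose proof (Rpower_pos s dl).
        assert (b0 * Rpower t0 dl * s = Rpower t0 dl * / Rpower s dl) by (rewrite <- H3; ring).
        assert (Rpower t0 dl * / Rpower s dl < 1).
        { apply (Rmult_lt_reg_r (Rpower s dl)); auto. rewrite Rmult_assoc, Rinv_l; lra. }
        lra. }
      destruct (Rlt_or_le t0 t) as [h|h]; [exact h|].
      pose proof (Hle t t0 Htp h). lra.
    + destruct Ht as [_ [h|h]]; auto. subst. lra.
Qed.

Lemma minimizer_ext f g t : (forall x, 0 < x -> f x = g x) -> is_minimizer g t -> is_minimizer f t.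
Proof.
  intros H [Ht Hm]. split; auto. intros x Hx Hne. rewrite !H; auto.
Qed.

Theorem theorem7 (N : nat) (lam r0 alpha W N0 : R) (d : nat) :
  (2 <= N)%nat -> 0 < lam -> (0 < d)%nat -> 0 < r0 -> INR d < alpha ->
  0 < W -> 0 < N0 ->
  (* (i) noise-limited regime *)
  is_minimizer (normalized (D_noise N r0 alpha W N0))
    (exp (LambertW (INR N / (Rpower r0 alpha * W * N0))) - 1)
  /\
  (* (ii) interference-limited regime *)
  (let delta := INR d / alpha in
   let b0 := lam * unit_ball_volume d * r0 ^ d * delta * Cdelta delta
             * Rpower (INR N - 1) (delta - 1) * Rpower (INR N) (- delta) in
   exists theta_opt,
     is_minimizer (normalized (D_interf N lam d r0 alpha)) theta_opt /\
     Rpower b0 (- (1 / (delta + 1))) - 1 < theta_opt < Rpower b0 (- (1 / delta))).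
Proof.
  intros HN Hlam Hd Hr Hda HW HN0. split.
  { apply part1; auto. }
  intros delta b0.
  assert (HNr : 2 <= INR N) by (replace 2 with (INR 2) by (simpl; ring); apply le_INR; lia).
  assert (Hdr : 0 < INR d) by (apply lt_0_INR; lia).
  assert (Hdl : 0 < delta < 1).
  { unfold delta. split. apply Rdiv_lt_0_compat; lra.
    apply (Rmult_lt_reg_r alpha); [lra|]. unfold Rdiv. rewrite Rmult_assoc, Rinv_l; lra. }
  assert (HC : 0 < Cdelta delta).
  { unfold Cdelta. pose proof PI_RGT_0.
    assert (0 < sin (PI * delta)) by (apply sin_gt_0; nra).
    apply Rdiv_lt_0_compat; nra. }
  destruct (ubv_pos d) as [Hc _].
  assert (Hrd : 0 < r0 ^ d) by (apply pow_lt; lra).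
  set (P1 := Rpower (INR N - 1) (1 - delta)).
  set (P2 := Rpower (INR N) delta).
  assert (HP1 : 0 < P1) by apply Rpower_pos.
  assert (HP2 : 0 < P2) by apply Rpower_pos.
  set (K := lam * unit_ball_volume d * r0 ^ d * Cdelta delta / (P1 * P2)).
  assert (HK : 0 < K).
  { unfold K. apply Rdiv_lt_0_compat; [|nra].
    apply Rmult_lt_0_compat; [|exact HC]. apply Rmult_lt_0_compat; [|exact Hrd]. apply Rmult_lt_0_compat; assumption. }
  assert (Hb : b0 = K * delta).
  { unfold b0, K, P1, P2. replace (delta - 1) with (- (1 - delta)) by ring.
    rewrite !Rpower_Ropp. fold P1 P2. field. lra. }
  rewrite Hb.
  destruct (part2_core (INR N) K delta ltac:(lra) HK Hdl) as [t [Ht Hb2]].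
  exists t. split; auto.
  eapply minimizer_ext; [|exact Ht].
  intros x Hx. unfold normalized, D_interf. cbv zeta. fold delta. fold P1 P2.
  f_equal. f_equal. f_equal. unfold K. field. lra.
Qed.
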